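(* Let $(M,d)$ be a compact metric space, $\varphi:M\to M$ continuous, $\mathcal G=\{G_n\}\in\mathcal A(M)$, and $\mathbb P\in\mathcal P(M)$ with $\mathrm{supp}(\mathbb P)=M$. Assume that for every $\epsilon>0$ there are $K_n(\epsilon)\ge1$ with $\lim_{\epsilon\downarrow0}\limsup_nn^{-1}\log K_n(\epsilon)=0$ such that for every $n\ge1$ the inequalities $$K_n(\epsilon)^{-1}e^{G_n(x)-n\mathfrak p_\varphi(\mathcal G)}\le\mathbb P(B_n(x,\epsilon))\le K_n(\epsilon)e^{G_n(x)-n\mathfrak p_\varphi(\mathcal G)}$$ hold for $\mathbb P$-almost every $x\in M$. Then $\mathbb P$ is a weak Gibbs measure for $\mathcal G$.
   Context: $C(M),B(M)$: continuous/bounded Borel real functions, sup norm; $S_nG=\sum_{k<n}G\circ\varphi^k$; $B_n(x,\epsilon)=\{y:d(\varphi^ky,\varphi^kx)<\epsilon,0\le k<n\}$. $\mathcal A(M)$: $\{G_n\}\subset B(M)$ with some $\{G^{(k)}\}\subset C(M)$ satisfying $\lim_k\limsup_nn^{-1}\|G_n-S_nG^{(k)}\|_\infty=0$. Pressure $\mathfrak p_\varphi(\mathcal G)=\lim_{\epsilon\downarrow0}\limsup_nn^{-1}\log\inf\{\sum_{x\in E}e^{G_n(x)}:E\text{ finite},\bigcup_{x\in E}B_n(x,\epsilon)=M\}$. Weak Gibbs measure for $\mathcal G$: $\mathbb P\in\mathcal P(M)$ such that for every $n\ge1$, $\epsilon>0$ there is $K_n(\epsilon)\ge1$ with the two-sided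 bound above holding for every $x\in M$, and $\lim_{\epsilon\downarrow0}\limsup_nn^{-1}\log K_n(\epsilon)=0$. *)

(* Defs.v *)
From HB Require Import structures.
From mathcomp Require Import all_boot all_order all_algebra.
From mathcomp Require Import all_classical all_reals all_analysis.
Set Implicit Arguments. Unset Strict Implicit. Unset Printing Implicit Defensive.
Import Order.TTheory GRing.Theory Num.Theory.
Import numFieldNormedType.Exports.
Local Open Scope classical_set_scope.
Local Open Scope ring_scope.

(** Metric spaces with a distinguished point (needed by the library's
    generated-sigma-algebra construction; harmless since a probability
    measure forces M to be nonempty). *)
#[short(type="pointedMetricType")]
HB.structure Definition PointedMetric (K : numDomainType) :=
  { M of Pointed M & Metric K M }.

Notation BorelType M := (g_sigma_algebraType (@open M)).

Section Defs.
Context {R : realType} {M : pointedMetricType R}.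

Definition bowen_ball (phi : M -> M) (n : nat) (x : M) (eps : R) : set M :=
  [set y | forall k : nat, (k < n)%N -> mdist (iter k phi y) (iter k phi x) < eps].

Definition birkhoff (phi : M -> M) (n : nat) (G : M -> R) : M -> R :=
  fun x => \sum_(k < n) G (iter k phi x).

Definition supnorm (f : M -> R) : R := sup (range (fun x => `|f x|)).

Definition bounded_borel (f : M -> R) : Prop :=
  measurable_fun setT (f : BorelType M -> R) /\ exists c : R, forall x, `|f x| <= c.

Definition asymp_additive (phi : M -> M) (G : nat -> M -> R) : Prop :=
  (forall n, bounded_borel (G n)) /\
  exists Gk : nat -> M -> R, (forall k, continuous (Gk k)) /\
    (fun k => limn_esup (fun n =>
        (n%:R^-1 * supnorm (fun x => G n x - birkhoff phi n (Gk k) x))%:E))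
      @ \oo --> 0%E.

Definition cover_sums (phi : M -> M) (G : nat -> M -> R) (n : nat) (eps : R) : set R :=
  [set s | exists E : seq M, uniq E /\
      (forall y : M, exists2 x, x \in E & bowen_ball phi n x eps y) /\
      s = \sum_(x <- E) expR (G n x)].

Definition pressure (phi : M -> M) (G : nat -> M -> R) : R :=
  fine (lim ((fun eps : R => limn_esup (fun n =>
              (n%:R^-1 * ln (inf (cover_sums phi G n eps)))%:E)) @ 0^'+)).

Definition msupport (P : set (BorelType M) -> \bar R) : set M :=
  [set x | forall U : set M, open U -> U x -> (0 < P U)%E].

Definition weak_gibbs (phi : M -> M) (G : nat -> M -> R)
    (P : set (BorelType M) -> \bar R) : Prop :=
  exists K : nat -> R -> R,
    (forall n eps, (1 <= n)%N -> 0 < eps -> 1 <= K n eps) /\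
    (forall n eps x, (1 <= n)%N -> 0 < eps ->
       (((K n eps)^-1 * expR (G n x - n%:R * pressure phi G))%:E <=
          P (bowen_ball phi n x eps))%E /\
       (P (bowen_ball phi n x eps) <=
        (K n eps * expR (G n x - n%:R * pressure phi G))%:E)%E) /\
    (fun eps : R => limn_esup (fun n => (n%:R^-1 * ln (K n eps))%:E)) @ 0^'+ --> 0%E.

End Defs.

(* Main.v *)
Require Import Defs.
From HB Require Import structures.
From mathcomp Require Import all_boot all_order all_algebra.
From mathcomp Require Import all_classical all_reals all_analysis.
From mathcomp Require Import ring lra.
Import Order.TTheory GRing.Theory Num.Theory.
Import numFieldNormedType.Exports.
Local Open Scope classical_set_scope.
Local Open Scope ring_scope.

Section E.
Context {R : realType}.
Implicit Type u : (\bar R)^nat.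
Local Open Scope ereal_scope.

Lemma esup_le_near u l : (\forall n \near \oo, u n <= l) -> limn_esup u <= l.
Proof.
move=> H; rewrite /limn_esup /limf_esup.
apply: le_trans; first by apply: ereal_inf_lbound; exists [set n | u n <= l].
by apply: ge_ereal_sup => _ [n un <-].
Qed.

Lemma esup_ge_near u l : (\forall n \near \oo, l <= u n) -> l <= limn_esup u.
Proof.
move=> H; rewrite limn_esup_lim; apply: lime_ge; first exact: is_cvg_esups.
apply: filterS H => n ln; apply: le_trans ln _.
by apply: ereal_sup_ubound; exists n => /=.
Qed.

Lemma esup_lt_near u l : limn_esup u < l -> \forall n \near \oo, u n < l.
Proof.
rewrite /limn_esup /limf_esup => /ereal_inf_lt [_ [A FA <-]] Al.
apply: filterS FA => n An; apply: le_lt_trans Al.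
by apply: ereal_sup_ubound; exists n.
Qed.
End E.

Section T.
Context {R : realType} {M : pointedMetricType R}.

Lemma iter_cont (phi : M -> M) k : continuous phi -> continuous (iter k phi).
Proof.
move=> cphi; elim: k => [|k IH] x /=; first exact: cvg_id.
exact: (continuous_comp (IH x) (cphi _)).
Qed.

Lemma near_mdist (f : M -> M) (c : M) (e : R) y : continuous f ->
  mdist (f y) c < e -> \forall z \near y, mdist (f z) c < e.
Proof.
move=> cf d; have r0 : 0 < e - mdist (f y) c by rewrite subr_gt0.
have H : \forall z \near y, ball (f y) (e - mdist (f y) c) (f z) := cf y _ (nbhsx_ballx (f y) _ r0).
apply: filterS H => z /=.
rewrite ballEmdist /= => h.
apply: le_lt_trans (metric_triangle _ (f y) _) _.
by rewrite metric_sym -ltrBrDr.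
Qed.

Lemma bowen_open (phi : M -> M) n x eps : continuous phi ->
  open (bowen_ball phi n x eps).
Proof.
move=> cphi; rewrite openE => y By; rewrite /interior.
suff: \forall z \near y, forall k, (k < n)%N -> mdist (iter k phi z) (iter k phi x) < eps by [].
elim: n By => [|n IH] By; first exact: nearW.
have h1 : \forall z \near y, forall k, (k < n)%N -> mdist (iter k phi z) (iter k phi x) < eps.
  by apply: IH => k kn; apply: By; rewrite ltnS ltnW.
have h2 := near_mdist _ _ _ _ (iter_cont phi n cphi) (By n (ltnSn n)).
apply: filterS (filterI h1 h2) => z [H1 H2] k; rewrite ltnS leq_eqVlt => /orP[/eqP->//|].
exact: H1.
Qed.

Lemma open_meas (U : set M) : open U -> measurable (U : set (BorelType M)).
Proof. by move=> oU; apply: sub_sigma_algebra. Qed.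

Lemma cont_bounded (g : M -> R) : compact [set: M] -> continuous g ->
  exists c, forall x, `|g x| <= c.
Proof.
move=> cM cg.
have := (compact_near_coveringP [set: M]).1 cM R (+oo%R) (fun c x => `|g x| <= c) _.
case=> [x _|].
  exists ([set z | `|g z| < `|g x| + 1], [set c | `|g x| + 1 < c]); first split.
  - have H : \forall z \near x, `|g x - g z| < 1 := @cvgr_dist_lt _ _ _ _ (nbhs_pfilter x) g (g x) (cg x) _ (@ltr01 R).
    apply: filterS H => z /= h.
    rewrite -[g z](subrKC (g x)); apply: le_lt_trans (ler_normD _ _) _.
    by rewrite ltrD2l distrC.
  - by exists (`|g x| + 1).
  by move=> [z c] [/= zs cs]; apply: ltW (lt_trans zs cs).
move=> c [_ Hc]; exists (c + 1) => x; apply: (Hc (c+1)) => //.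
by rewrite ltrDl.
Qed.

Lemma unif_near (g : M -> R) : compact [set: M] -> continuous g ->
  forall eta, 0 < eta -> \forall d \near (0:R)^'+,
    forall x y, mdist x y < d -> `|g x - g y| < eta.
Proof.
move=> cM cg eta eta0.
have e2 : 0 < eta / 2 by rewrite divr_gt0.
pose P := (fun d x => forall y, mdist x y < d -> `|g x - g y| < eta).
have cov : forall x, [set: M] x -> \forall x' \near x & d \near (0:R)^'+, P d x'.
  move=> x _.
  have H : \forall z \near x, `|g x - g z| < eta / 2 :=
    @cvgr_dist_lt _ _ _ _ (nbhs_pfilter x) g (g x) (cg x) _ e2.
  move/nbhs_ballP: H => [r /= r0 Hr].
  have r20 : 0 < r / 2 by rewrite divr_gt0.
  exists (ball x (r / 2), [set d | 0 < d < r / 2]); first split.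
  - exact: nbhsx_ballx.
  - have h1 := nbhs_right_lt r20; have h2 := nbhs_right_gt (0:R).
    apply: filterS (filterI h1 h2) => d [h3 h4]. by rewrite /= h3 h4.
  move=> [x' d] [/= xx' /andP[d0 dr]] y x'y.
  rewrite ballEmdist /= in xx'.
  have xy : ball x r y.
    rewrite ballEmdist /=.
    apply: le_lt_trans (metric_triangle _ x' _) _.
    by rewrite [r]splitr ltrD // (lt_trans x'y).
  have xx'r : ball x r x'.
    by rewrite ballEmdist /=; apply: lt_trans xx' _; by rewrite ltr_pdivrMr // ltr_pMr // ltr1n.
  have h1 := Hr _ xy; have h2 := Hr _ xx'r; rewrite /= in h1 h2.
  apply: le_lt_trans (ler_distD (g x) _ _) _.
  by rewrite [eta]splitr distrC ltrD.
have H : \forall d \near (0:R)^'+, [set: M] `<=` P d :=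
  (compact_near_coveringP [set: M]).1 cM R ((0:R)^'+) P _ cov.
case: H => e e0 He; exists e => // t te t0 x y; exact: (He t te t0 x I y).
Qed.

Definition Dn (phi : M -> M) (G : nat -> M -> R) n eps :=
  sup [set r | exists a b, bowen_ball phi n a eps b /\ r = `|G n a - G n b|].

Lemma D_ub (phi : M -> M) (G : nat -> M -> R) n (eps : R) a b : (exists c, forall x, `|G n x| <= c) ->
  bowen_ball phi n a eps b -> `|G n a - G n b| <= Dn phi G n eps.
Proof.
move=> [c Hc] Bab; apply: ub_le_sup; last by exists a, b.
exists (c + c) => _ [a' [b' [_ ->]]].
by apply: le_trans (ler_normB _ _) _; rewrite lerD.
Qed.

Lemma bowen_center (phi : M -> M) n x (eps : R) : 0 < eps -> bowen_ball phi n x eps x.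
Proof. by move=> e0 k _; rewrite mdistxx. Qed.

Lemma D_ge0 (phi : M -> M) (G : nat -> M -> R) n (eps : R) : (exists c, forall x, `|G n x| <= c) -> 0 < eps ->
  0 <= Dn phi G n eps.
Proof.
move=> Hc e0.
have := D_ub phi G n eps point point Hc (bowen_center phi n point eps e0).
by apply: le_trans.
Qed.

Lemma bowen_sub (phi : M -> M) n x y (e1 e2 e3 : R) : bowen_ball phi n x e1 y -> e2 + e1 <= e3 ->
  bowen_ball phi n y e2 `<=` bowen_ball phi n x e3.
Proof.
move=> Bxy le z Bz k kn.
apply: le_lt_trans (metric_triangle _ (iter k phi y) _) _.
apply: lt_le_trans le; exact: ltrD (Bz k kn) (Bxy k kn).
Qed.

Lemma bowen_sub2 (phi : M -> M) n x y (e1 e2 e3 : R) : bowen_ball phi n x e1 y -> e2 + e1 <= e3 ->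
  bowen_ball phi n x e2 `<=` bowen_ball phi n y e3.
Proof.
move=> Bxy le z Bz k kn.
apply: le_lt_trans (metric_triangle _ (iter k phi x) _) _.
apply: lt_le_trans le; apply: ltrD (Bz k kn) _.
by rewrite metric_sym; apply: Bxy.
Qed.

Lemma gibbs_pt (phi : M -> M) (G : nat -> M -> R) (P : probability (BorelType M) R)
  (K : nat -> R -> R) (p : R) n eps x :
  continuous phi -> msupport P = [set: M] ->
  (forall n, exists c, forall x, `|G n x| <= c) ->
  (forall n eps, (1 <= n)%N -> 0 < eps -> 1 <= K n eps) ->
  (forall n eps, (1 <= n)%N -> 0 < eps ->
     {ae P, forall x : BorelType M,
       (((K n eps)^-1 * expR (G n x - n%:R * p))%:E <=
          P (bowen_ball phi n x eps))%E /\
       (P (bowen_ball phi n x eps) <=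
        (K n eps * expR (G n x - n%:R * p))%:E)%E}) ->
  (1 <= n)%N -> 0 < eps ->
  (((Num.max (K n (eps/2)) (K n (eps*2)) * expR (Dn phi G n eps))^-1
      * expR (G n x - n%:R * p))%:E <= P (bowen_ball phi n x eps))%E /\
  (P (bowen_ball phi n x eps) <=
      ((Num.max (K n (eps/2)) (K n (eps*2)) * expR (Dn phi G n eps))
      * expR (G n x - n%:R * p))%:E)%E.
Proof.
move=> cphi supp Gb K1 Hae n1 e0.
have e20 : 0 < eps / 2 by rewrite divr_gt0.
have e30 : 0 < eps * 2 by rewrite mulr_gt0.
have [N [mN PN sub]] := negligibleU (Hae n (eps/2) n1 e20) (Hae n (eps*2) n1 e30).
have [y [Bxy [Q1 Q2]]] : exists y, bowen_ball phi n x (eps/2) y /\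
  ((((K n (eps/2))^-1 * expR (G n y - n%:R * p))%:E <=
          P (bowen_ball phi n y (eps/2)))%E /\
       (P (bowen_ball phi n y (eps/2)) <=
        (K n (eps/2) * expR (G n y - n%:R * p))%:E)%E) /\
  ((((K n (eps*2))^-1 * expR (G n y - n%:R * p))%:E <=
          P (bowen_ball phi n y (eps*2)))%E /\
       (P (bowen_ball phi n y (eps*2)) <=
        (K n (eps*2) * expR (G n y - n%:R * p))%:E)%E).
  apply: contrapT => Hn.
  have : msupport P x by rewrite supp.
  move=> /(_ _ (bowen_open phi n x (eps/2) cphi) (bowen_center phi n x _ e20)).
  apply/negP; rewrite -leNgt -PN.
  apply: le_measure; rewrite ?in_setE //; first exact: open_meas (bowen_open _ _ _ _ cphi).
  move=> z Bz; apply: sub.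
  have [h1|h1] := pselect (((((K n (eps/2))^-1 * expR (G n z - n%:R * p))%:E <=
          P (bowen_ball phi n z (eps/2)))%E /\
       (P (bowen_ball phi n z (eps/2)) <=
        (K n (eps/2) * expR (G n z - n%:R * p))%:E)%E)); last by left.
  right => h2; apply: Hn; exists z; split => //; split => //.
have Bxy' : bowen_ball phi n x eps y.
  move=> k kn; apply: lt_trans (Bxy k kn) _; by rewrite ltr_pdivrMr // ltr_pMr // ltr1n.
have GD := D_ub phi G n eps x y (Gb n) Bxy'.
have GD1 : G n x - G n y <= Dn phi G n eps := le_trans (ler_norm _) GD.
have GD2 : G n y - G n x <= Dn phi G n eps by rewrite -opprB normrN in GD; exact: le_trans (ler_norm _) GD.
have Ka := K1 n (eps/2) n1 e20; have Kb := K1 n (eps*2) n1 e30.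
have I1 : bowen_ball phi n y (eps/2) `<=` bowen_ball phi n x eps.
  by apply: bowen_sub Bxy _; rewrite -splitr.
have I2 : bowen_ball phi n x eps `<=` bowen_ball phi n y (eps*2).
  by apply: bowen_sub2 Bxy _; lra.
have mB : forall z e, measurable (bowen_ball phi n z e : set (BorelType M)).
  by move=> z e; apply: open_meas; apply: bowen_open.
split.
- apply: (@le_trans _ _ (P (bowen_ball phi n y (eps/2)))); last first.
    by apply: le_measure; rewrite ?in_setE; [exact: mB|exact: mB|exact: I1].
  apply: le_trans Q1.1; rewrite lee_fin invfM -mulrA.
  apply: ler_pM.
  + by rewrite invr_ge0 (le_trans _ (le_trans Ka _)) // le_max lexx.
  + by rewrite -expRN -expRD expR_ge0.
  + rewrite lef_pV2 ?posrE ?(lt_le_trans ltr01 Ka) //; last first.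
      by rewrite (lt_le_trans ltr01 (le_trans Ka _)) // le_max lexx.
    by rewrite le_max lexx.
  + rewrite -expRN -expRD ler_expR; lra.
- apply: (@le_trans _ _ (P (bowen_ball phi n y (eps*2)))).
    by apply: le_measure; rewrite ?in_setE; [exact: mB|exact: mB|exact: I2].
  apply: le_trans Q2.2 _; rewrite lee_fin -mulrA.
  apply: ler_pM.
  + exact: le_trans ler01 Kb.
  + exact: expR_ge0.
  + by rewrite le_max lexx orbT.
  + rewrite -expRD ler_expR; lra.
Qed.

Lemma D_le (phi : M -> M) (G : nat -> M -> R) (g : M -> R) n (eps eta c ck : R) :
  (forall x, `|G n x| <= c) -> (forall x, `|g x| <= ck) ->
  (forall a b, mdist a b < eps -> `|g a - g b| < eta) -> 0 < eps ->
  Dn phi G n eps <= 2 * supnorm (fun x => G n x - birkhoff phi n g x) + n%:R * eta.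
Proof.
move=> Hc Hck U e0.
set s := supnorm _.
have hs : forall z, `|G n z - birkhoff phi n g z| <= s.
  move=> z; apply: ub_le_sup; last by exists z.
  exists (c + \sum_(j < n) ck) => _ [w _ <-].
  apply: le_trans (ler_normB _ _) _; apply: lerD => //.
  apply: le_trans (ler_norm_sum _ _ _) _.
  by apply: ler_sum => j _; apply: Hck.
have hS : forall a b, bowen_ball phi n a eps b ->
    `|birkhoff phi n g a - birkhoff phi n g b| <= n%:R * eta.
  move=> a b Bab; rewrite /birkhoff -sumrB.
  apply: le_trans (ler_norm_sum _ _ _) _.
  apply: (@le_trans _ _ (\sum_(j < n) eta)).
    apply: ler_sum => j _; apply: ltW; rewrite distrC; apply: U; exact: Bab j (ltn_ord j).
  by rewrite sumr_const card_ord mulr_natl.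
apply: ge_sup.
  by exists `|G n point - G n point|, point, point; split => //; apply: bowen_center.
move=> _ [a [b [Bab ->]]].
apply: le_trans (ler_distD (birkhoff phi n g a) _ _) _.
have h1 := hs a; have h2 := hs b; rewrite distrC in h2.
have h3 := le_trans (ler_distD (birkhoff phi n g b) _ _) (lerD (hS a b Bab) h2).
have := lerD h1 h3; lra.
Qed.

Lemma lim_part (phi : M -> M) (G : nat -> M -> R) (K : nat -> R -> R)
  (Gk : nat -> M -> R) :
  compact [set: M] -> (forall k, continuous (Gk k)) ->
  (forall n, exists c, forall x, `|G n x| <= c) ->
  (forall n eps, (1 <= n)%N -> 0 < eps -> 1 <= K n eps) ->
  (fun eps : R => limn_esup (fun n => (n%:R^-1 * ln (K n eps))%:E)) @ 0^'+ --> 0%E ->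
  (fun k => limn_esup (fun n =>
        (n%:R^-1 * supnorm (fun x => G n x - birkhoff phi n (Gk k) x))%:E))
      @ \oo --> 0%E ->
  (fun eps : R => limn_esup (fun n => (n%:R^-1 *
     ln (Num.max (K n (eps/2)) (K n (eps*2)) * expR (Dn phi G n eps)))%:E))
     @ 0^'+ --> 0%E.
Proof.
move=> cM Gkc Gb K1 Klim Gklim.
set f := fun eps : R => limn_esup _.
have key : forall eta, 0 < eta -> \forall eps \near (0:R)^'+,
    (0 <= f eps)%E /\ (f eps <= (4 * eta)%:E)%E.
  move=> eta eta0.
  pose a := fun eps : R => limn_esup (fun n => (n%:R^-1 * ln (K n eps))%:E).
  have HK : \forall e \near (0:R)^'+, (a e < eta%:E)%E.
    move/fine_cvgP: Klim => [Hfin Hlim].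
    have H := @cvgr_dist_lt _ _ _ _ _ (fine \o a) 0 Hlim eta eta0.
    apply: filterS (filterI Hfin (H (at_right_proper_filter 0))) => e [fe he].
    rewrite /a -(fineK fe) lte_fin; rewrite sub0r normrN in he.
    exact: le_lt_trans (ler_norm _) he.
  case: HK => del del0 Hdel.
  move/fine_cvgP: Gklim => [Hfin2 Hlim2].
  have H2 := cvgr_dist_lt _ _ Hlim2 _ eta0.
  have [k0 _ /(_ k0 (leqnn k0)) [fk0 hk0]] := filterI Hfin2 (H2 eventually_filter).
  have [ck Hck] := cont_bounded _ cM (Gkc k0).
  have U := unif_near _ cM (Gkc k0) _ eta0.
  have del2 : 0 < del / 2 by rewrite divr_gt0.
  have N1 := nbhs_right_gt (0:R); have N2 := nbhs_right_lt del2.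
  apply: filterS (filterI N1 (filterI N2 U)) => eps [e0 [edel Ue]].
  have La : (a (eps/2)%R < eta%:E)%E.
    apply: Hdel; last by rewrite divr_gt0.
    rewrite /ball_ /= sub0r normrN gtr0_norm ?divr_gt0 //; lra.
  have Lb : (a (eps*2)%R < eta%:E)%E.
    apply: Hdel; last by rewrite mulr_gt0.
    rewrite /ball_ /= sub0r normrN gtr0_norm ?mulr_gt0 //; lra.
  have Lk : (limn_esup (fun n : nat =>
       (n%:R^-1 * supnorm (fun x : M => G n x - birkhoff phi n (Gk k0) x))%:E)
       < eta%:E)%E.
    rewrite -(fineK fk0) lte_fin; move: hk0; rewrite /= sub0r normrN => h.
    exact: le_lt_trans (ler_norm _) h.
  have A1 := esup_lt_near _ _ La; have A2 := esup_lt_near _ _ Lb; have A3 := esup_lt_near _ _ Lk.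
  have A0 : \forall n \near \oo, (1 <= n)%N by exists 1%N.
  split.
  - apply: esup_ge_near; move: A0; apply: filterS => n n1.
    rewrite lee_fin; apply: mulr_ge0; first by rewrite invr_ge0.
    apply: ln_ge0; apply: mulr_ege1.
      by rewrite le_max K1 ?divr_gt0.
    have D0 := D_ge0 phi G n eps (Gb n) e0.
    apply: le_trans (expR_ge1Dx _); lra.
  - apply: esup_le_near.
    apply: filterS (filterI A0 (filterI A1 (filterI A2 A3))) => n [n1 [h1 [h2 h3]]].
    rewrite lte_fin in h1 h2 h3; rewrite lee_fin.
    have [cn Hcn] := Gb n.
    have hD := D_le phi G (Gk k0) n eps eta cn ck Hcn Hck Ue e0.
    have m0 : 0 < Num.max (K n (eps/2)) (K n (eps*2)).
      by rewrite (lt_le_trans ltr01) // le_max K1 ?divr_gt0.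
    rewrite lnM ?posrE ?expR_gt0 // expRK mulrDr.
    have hm : n%:R^-1 * ln (Num.max (K n (eps/2)) (K n (eps*2))) < eta.
      have [h|h] := leP (K n (eps/2)) (K n (eps*2)).
        by [].
      by [].
    have n0 : (n%:R : R) != 0 by rewrite pnatr_eq0 -lt0n.
    set s := supnorm _ in hD h3.
    have hn : n%:R^-1 * Dn phi G n eps <= 2 * (n%:R^-1 * s) + eta.
      apply: le_trans (ler_wpM2l _ hD) _; first by rewrite invr_ge0.
      rewrite le_eqVlt; apply/orP; left; apply/eqP; field.
      by [].
    move: h3; rewrite lte_fin => h3; lra.
apply/fine_cvgP; split.
  have := key 1 ltr01; apply: filterS => e [h1 h2].
  by rewrite ge0_fin_numE // (le_lt_trans h2) // ltry.
apply/cvgrPdist_le => e e0.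
have e4 : 0 < e / 4 by rewrite divr_gt0.
have := key _ e4; apply: filterS => eps [].
rewrite /=; case: (f eps) => [r||] //=; rewrite !lee_fin => h1 h2.
rewrite sub0r normrN ger0_norm //; lra.
Qed.
End T.

Theorem lemma4p3 (R : realType) (M : pointedMetricType R)
  (phi : M -> M) (G : nat -> M -> R) (P : probability (BorelType M) R)
  (K : nat -> R -> R) :
  compact [set: M] ->
  continuous phi ->
  asymp_additive phi G ->
  msupport P = [set: M] ->
  (forall n eps, (1 <= n)%N -> 0 < eps -> 1 <= K n eps) ->
  (fun eps : R => limn_esup (fun n => (n%:R^-1 * ln (K n eps))%:E)) @ 0^'+ --> 0%E ->
  (forall n eps, (1 <= n)%N -> 0 < eps ->
     {ae P, forall x : BorelType M,
       (((K n eps)^-1 * expR (G n x - n%:R * pressure phi G))%:E <=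
          P (bowen_ball phi n x eps))%E /\
       (P (bowen_ball phi n x eps) <=
        (K n eps * expR (G n x - n%:R * pressure phi G))%:E)%E}) ->
  weak_gibbs phi G P.
Proof.
move=> cM cphi [Gbb [Gk [Gkc Gklim]]] supp K1 Klim Hae.
have Gb : forall n, exists c, forall x, `|G n x| <= c by move=> n; case: (Gbb n).
exists (fun n eps => Num.max (K n (eps/2)) (K n (eps*2)) * expR (Dn phi G n eps)).
split.
  move=> n eps n1 e0; apply: mulr_ege1.
    by rewrite le_max K1 ?divr_gt0.
  have D0 := D_ge0 phi G n eps (Gb n) e0.
  apply: le_trans (expR_ge1Dx _); lra.
split.
  move=> n eps x n1 e0.
  exact: (gibbs_pt phi G P K (pressure phi G) n eps x cphi supp Gb K1 Hae n1 e0).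
exact: (lim_part phi G K Gk cM Gkc Gb K1 Klim Gklim).
Qed.
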